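(* Let $X$ be a compact metric space and $f\colon X\to X$ a homeomorphism. Then the set $\mathcal{M}_{idis}(f)$ of Borel probability measures on $X$ that are inner-distal with respect to $f$ is a closed, convex subset of $\mathcal{M}(X)$ satisfying $f_*(\mathcal{M}_{idis}(f))\subseteq\mathcal{M}_{idis}(f)$.
   Context: $\mathcal{M}(X)$ is the set of Borel probability measures on $X$ with the weak* topology ($\mu_n\to\mu$ iff $\int\varphi\,d\mu_n\to\int\varphi\,d\mu$ for all continuous $\varphi\colon X\to\mathbb{R}$). $f_*\mu(E)=\mu(f^{-1}(E))$. The proximal cell of $x$ is $\mathcal{P}(x)=\{y\colon \inf_{n\in\mathbb{Z}} d(f^n(x),f^n(y))=0\}$, and $\mu$ is inner-distal w.r.t. $f$ if $\mu(\operatorname{Int}\mathcal{P}(x))=0$ for all $x\in X$. *)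

(* Defs.v *)
From HB Require Import structures.
From mathcomp Require Import all_boot all_order all_algebra.
From mathcomp Require Import all_classical all_reals all_analysis.
Set Implicit Arguments. Unset Strict Implicit. Unset Printing Implicit Defensive.
Import Order.TTheory GRing.Theory Num.Theory.
Import numFieldNormedType.Exports.
Local Open Scope classical_set_scope.
Local Open Scope ring_scope.

Notation borelT X := (g_sigma_algebraType (@open X)).

(* pointed metric spaces (measurable types in mathcomp-analysis are pointed) *)
#[short(type="pmetricType")]
HB.structure Definition PMetric (K : numDomainType) :=
  { M of Pointed M & Metric K M }.

Section Defs.
Context {R : realType} (X : pmetricType R).

(* integer iterates f^n of a homeomorphism f with inverse g *)
Definition iterz (f g : X -> X) (n : int) : X -> X :=
  match n with
  | Posz k => iter k f
  | Negz k => iter k.+1 g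
  end.

Definition proximal_cell (f g : X -> X) (x : X) : set X :=
  [set y | inf [set mdist (iterz f g n x) (iterz f g n y) | n in [set: int]] = 0].

Definition inner_distal (f g : X -> X) (mu : probability (borelT X) R) : Prop :=
  forall x : X, mu (interior (proximal_cell f g x)) = 0%E.

Definition M_idis (f g : X -> X) : set (probability (borelT X) R) :=
  [set mu | inner_distal f g mu].

Definition pint (mu : probability (borelT X) R) (phi : X -> R) : R :=
  fine (\int[mu]_x (phi x)%:E).

(* closedness in the weak-* topology on M(X): every measure all of whose
   basic weak-* neighbourhoods { nu : |\int phi_i dnu - \int phi_i dmu| < e,
   i < n } meet S belongs to S *)
Definition weak_star_closed (S : set (probability (borelT X) R)) : Prop :=
  forall mu : probability (borelT X) R,
    (forall (n : nat) (phi : 'I_n -> X -> R) (e : R),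
        (forall i, continuous (phi i)) -> 0 < e ->
        exists nu, S nu /\ forall i, `|pint nu (phi i) - pint mu (phi i)| < e) ->
    S mu.

Definition measure_convex (S : set (probability (borelT X) R)) : Prop :=
  forall (mu nu lam : probability (borelT X) R) (t : R),
    S mu -> S nu -> 0 <= t <= 1 ->
    (forall A : set (borelT X), measurable A ->
       lam A = (t%:E * mu A + (1 - t)%:E * nu A)%E) ->
    S lam.

Definition pushforward_stable (f : X -> X) (S : set (probability (borelT X) R)) : Prop :=
  forall (mu lam : probability (borelT X) R),
    S mu ->
    (forall A : set (borelT X), measurable A -> lam A = mu (f @^-1` A)) ->
    S lam.

End Defs.

(* Main.v *)
Require Import Defs.
From HB Require Import structures.
From mathcomp Require Import all_boot all_order all_algebra.
From mathcomp Require Import all_classical all_reals all_analysis.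
From mathcomp Require Import measurable_realfun.
Import Order.TTheory GRing.Theory Num.Theory.
Import numFieldNormedType.Exports.
Local Open Scope classical_set_scope.
Local Open Scope ring_scope.
Section H.
Context {R : realType} (X : pmetricType R).

Lemma open_meas (U : set X) : open U -> measurable (U : set (borelT X)).
Proof. by move=> oU; apply: sub_sigma_algebra. Qed.

Lemma iterz_f (f g : X -> X) (hfg : cancel f g) (n : int) y :
  iterz f g n (f y) = iterz f g (n + 1) y.
Proof.
case: n => [k|k].
  have -> : (Posz k + 1 = Posz k.+1)%R by rewrite -addn1 PoszD.
  exact: (esym (iterSr k f y)).
case: k => [|j].
  have -> : (Negz 0 + 1 = Posz 0)%R by [].
  by rewrite /= hfg.
have -> : (Negz j.+1 + 1 = Negz j)%R.
  by rewrite !NegzE -addn1 PoszD opprD addrNK.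
congr g; have := iterSr j g (f y); rewrite /= hfg => ->.
by [].
Qed.

Lemma cell_pre (f g : X -> X) (hfg : cancel f g) (hgf : cancel g f) x y :
  proximal_cell f g x (f y) -> proximal_cell f g (g x) y.
Proof.
rewrite /proximal_cell /=.
suff -> : [set mdist (iterz f g n x) (iterz f g n (f y)) | n in [set: int]] =
   [set mdist (iterz f g n (g x)) (iterz f g n y) | n in [set: int]] by [].
rewrite -{1}(hgf x); apply/seteqP; split => r [n _ <-].
  by exists (n + 1)%R => //; rewrite !(iterz_f _ _ hfg).
exists (n - 1)%R => //; rewrite !(iterz_f _ _ hfg).
by have -> : (n - 1 + 1 = n)%R by rewrite subrK.
Qed.


Lemma push_stable (f g : X -> X) (hf : continuous f) (hfg : cancel f g)
  (hgf : cancel g f) : pushforward_stable f (M_idis f g).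
Proof.
move=> mu lam hmu hlam x.
have oU : open (f @^-1` interior (proximal_cell f g x)).
  by apply: open_comp; [move=> ? _; exact: hf | exact: open_interior].
rewrite hlam; last by apply: sub_sigma_algebra; exact: open_interior.
apply/eqP; rewrite eq_le measure_ge0 andbT -(hmu (g x)).
apply: le_measure; rewrite ?inE; first exact: sub_sigma_algebra.
  by apply: sub_sigma_algebra; exact: open_interior.
rewrite -open_subsetE // => y /= /interior_subset hy.
exact: cell_pre.
Qed.

Lemma convex_idis (f g : X -> X) : measure_convex (M_idis f g).
Proof.
move=> mu nu lam t hmu hnu _ hlam x.
rewrite hlam; last by apply: sub_sigma_algebra; exact: open_interior.
by rewrite hmu hnu !mule0 adde0.
Qed.


Lemma cont_meas (phi : X -> R) : continuous phi ->
  measurable_fun (setT : set (borelT X)) (fun x : borelT X => (phi x)%:E).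
Proof.
move=> cphi; apply/measurable_EFinP.
apply: (measurability _ (RGenOInfty.measurableE R)) => //.
move=> _ [_ [r ->] <-]; rewrite setTI.
apply: sub_sigma_algebra; apply: open_comp; first by move=> ? _; exact: cphi.
exact: interval_open.
Qed.

Local Open Scope ereal_scope.
Lemma int_bounds (P : probability (borelT X) R) (phi : X -> R) (F U : set X) :
  continuous phi -> (forall x, (0 <= phi x <= 1)%R) ->
  (forall x, ~ U x -> phi x = 0%R) -> (forall x, F x -> phi x = 1%R) ->
  measurable (F : set (borelT X)) -> measurable (U : set (borelT X)) ->
  P F <= \int[P]_x (phi x)%:E <= P U.
Proof.
move=> cphi h01 h0 h1 mF mU; apply/andP; split.
  rewrite -(setIT F) -integral_indic //.
  apply: ge0_le_integral => //.
  - by apply/measurable_EFinP; exact: measurable_indic.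
  - exact: cont_meas.
  move=> x _; rewrite lee_fin indicE; case: (boolP (x \in F)) => [/set_mem /h1 -> //|_].
  by case/andP: (h01 x).
rewrite -(setIT U) -integral_indic //.
apply: ge0_le_integral => //.
- by move=> x _; rewrite lee_fin; case/andP: (h01 x).
- exact: cont_meas.
- by apply/measurable_EFinP; exact: measurable_indic.
move=> x _; rewrite lee_fin indicE; case: (boolP (x \in U)) => [_|/negP hx].
  by case/andP: (h01 x).
by rewrite h0 // => /mem_set.
Qed.

Local Close Scope ereal_scope.

Definition Fk (U : set X) (k : nat) : set X :=
  [set w | forall a, ~ U a -> k.+1%:R^-1 <= mdist w a].

Lemma Fk_closed U k : closed (Fk U k).
Proof.
rewrite -[Fk U k]setCK; apply: open_closedC; rewrite openE => w hw.
have [a [nUa lt_wa]] : exists a, ~ U a /\ mdist w a < k.+1%:R^-1.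
  apply: contrapT => hne; apply: hw => a nUa; rewrite leNgt; apply/negP => hlt.
  by apply: hne; exists a.
rewrite /interior /=; apply/nbhs_ballP; exists (k.+1%:R^-1 - mdist w a).
  by rewrite /= subr_gt0.
move=> z; rewrite ballEmdist /= => hz hFz.
have := hFz a nUa; apply/negP; rewrite -ltNge.
apply: (le_lt_trans (metric_triangle z w a)).
by rewrite metric_sym -ltrBrDr.
Qed.

Lemma Fk_sub U k : Fk U k `<=` U.
Proof.
move=> w hw; apply: contrapT => nUw; have := hw w nUw.
by rewrite mdistxx leNgt invr_gt0 ltr0n.
Qed.

Lemma Fk_cover U : open U -> U `<=` \bigcup_k Fk U k.
Proof.
rewrite openE => oU w Uw; have := oU w Uw; rewrite /interior /= => /nbhs_ballP.
case=> eps /= eps0 hball.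
have [k hk] := ltr_add_invr eps0; rewrite add0r in hk.
exists k => // a nUa; rewrite leNgt; apply/negP => hlt; apply: nUa.
by apply: hball; rewrite ballEmdist /=; apply: lt_trans hk.
Qed.


Lemma closed_meas (A : set X) : closed A -> measurable (A : set (borelT X)).
Proof.
move=> cA; rewrite -[A]setCK; apply: measurableC; apply: sub_sigma_algebra.
exact: closed_openC.
Qed.

Lemma Fk_null (f g : X -> X) (mu : probability (borelT X) R) x k :
  (forall (n : nat) (phi : 'I_n -> X -> R) (e : R),
        (forall i, continuous (phi i)) -> 0 < e ->
        exists nu, M_idis f g nu /\ forall i, `|pint nu (phi i) - pint mu (phi i)| < e) ->
  mu (Fk (interior (proximal_cell f g x)) k) = 0%E.
Proof.
move=> hmu; set U := interior _; set F := Fk U k.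
have oU : open U := @open_interior _ _.
have mU : measurable (U : set (borelT X)) by apply: sub_sigma_algebra.
have mF : measurable (F : set (borelT X)) by apply: closed_meas; exact: Fk_closed.
have sep : uniform_separator (~` U) F.
  apply: ((normal_separatorP (R:=R)).1 pseudometric_normal).
  - exact: open_closedC.
  - exact: Fk_closed.
  apply/seteqP; split => // w [nUw /Fk_sub]; done.
pose phi := @Urysohn X R (~` U) F.
have cphi : continuous phi by apply: Urysohn_continuous.
have h01 w : (0 <= phi w <= 1)%R.
  by have := @Urysohn_range X R (~` U) F (phi w) (ex_intro2 _ _ w I erefl); rewrite /= in_itv.
have h0 w : ~ U w -> phi w = 0%R.
  by move=> nUw; apply: (Urysohn_sub0 sep); exists w.
have h1 w : F w -> phi w = 1%R.
  by move=> Fw; apply: (Urysohn_sub1 sep); exists w.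
case: (eqVneq (mu F) 0%E) => // hne; exfalso.
have muF0 : (0 <= mu F)%E := measure_ge0 _ _.
have muF1 : (mu F <= 1)%E := probability_le1 _ mF.
have muU1 : (mu U <= 1)%E := probability_le1 _ mU.
have Ffin : mu F \is a fin_num by rewrite ge0_fin_numE // (le_lt_trans muF1) // ltry.
set m := fine (mu F).
have m0 : 0 < m.
  by rewrite /m fine_gt0 // lt_neqAle eq_sym hne muF0 /= (le_lt_trans muF1) // ltry.
have e0 : 0 < m / 2 by rewrite divr_gt0.
have [nu [hnu hclose]] := hmu 1%N (fun _ => phi) (m / 2) (fun _ => cphi) e0.
have := hclose ord0.
have /andP [nuF nuU] := int_bounds nu phi F U cphi h01 h0 h1 mF mU.
have /andP [muF muU] := int_bounds mu phi F U cphi h01 h0 h1 mF mU.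
have -> : pint nu phi = 0.
  rewrite /pint; have -> : (\int[nu]_x0 (phi x0)%:E)%E = 0%E; last by [].
  apply/eqP; rewrite eq_le; rewrite hnu in nuU; rewrite nuU /=.
  exact: le_trans (measure_ge0 _ _) nuF.
have Ifin : (\int[mu]_x0 (phi x0)%:E)%E \is a fin_num.
  rewrite ge0_fin_numE; last exact: le_trans (measure_ge0 _ _) muF.
  by rewrite (le_lt_trans muU) // (le_lt_trans muU1) // ltry.
have : m <= pint mu phi.
  by rewrite /m /pint; apply: fine_le.
rewrite sub0r normrN => hm; rewrite ger0_norm; last exact: le_trans (ltW m0) hm.
apply/negP; rewrite -leNgt; apply: le_trans hm.
by rewrite ler_pdivrMr // ler_peMr // ?(ltW m0) // ler1n.
Qed.


Lemma closed_idis (f g : X -> X) : weak_star_closed (M_idis f g).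
Proof.
move=> mu hmu x; set U := interior _.
have oU : open U := @open_interior _ _.
have mU : measurable (U : set (borelT X)) by apply: sub_sigma_algebra.
have : mu.-negligible (\bigcup_k Fk U k).
  apply: negligible_bigcup => k; exists (Fk U k); split => //.
  - by apply: closed_meas; exact: Fk_closed.
  - exact: Fk_null.
case=> N [mN muN sN].
apply/eqP; rewrite eq_le measure_ge0 andbT -muN.
apply: le_measure; rewrite ?inE //.
by move=> w /(Fk_cover _ oU) /sN.
Qed.

End H.

Theorem lemma3p1 (R : realType) (X : pmetricType R) (f g : X -> X)
  (hX : compact [set: X])
  (hf : continuous f) (hg : continuous g)
  (hfg : cancel f g) (hgf : cancel g f) :
  [/\ weak_star_closed (M_idis f g),
      measure_convex (M_idis f g)
    & pushforward_stable f (M_idis f g)].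
Proof.
split; [exact: closed_idis | exact: convex_idis | exact: push_stable].
Qed.
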